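(* Let $S$ be a pairwise-intersecting double-interval society with $n\ge 1$ voters and approval number $a(S)$. Then $$a(S)\ \ge\ \left\lceil 2n+\tfrac12-\sqrt{3n^2-n+\tfrac14}\right\rceil,$$ so that $$\frac{a(S)}{n}\ \ge\ 2-\sqrt3+\frac{3+\sqrt3}{6n}-\frac{\sqrt3}{24n^2},$$ and equivalently $$n\ \le\ \left\lfloor 2a(S)-\tfrac32+\sqrt{3a(S)^2-5a(S)+\tfrac94}\right\rfloor.$$
   Context: A double-interval society consists of a finite set $V$ of $n$ voters, each voter $v$ having an approval set $A_v\subseteq\mathbb{R}$ that is the union of two disjoint bounded closed intervals. The society is pairwise-intersecting if $A_u\cap A_v\neq\emptyset$ for all voters $u,v$. For a point (platform) $p\in\mathbb{R}$, its approval number $a(p)$ is the number of voters $v$ with $p\in A_v$; the approval number of the society is $a(S)=\max_{p\in\mathbb{R}}a(p)$, and its approval ratio is $a(S)/n$. *)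

(* Defs.v *)
From Stdlib Require Import Reals Lra ZArith List.
Open Scope R_scope.

Record dinterval := DI { l1 : R; r1 : R; l2 : R; r2 : R }.

Definition valid_dinterval (A : dinterval) : Prop :=
  l1 A <= r1 A /\ r1 A < l2 A /\ l2 A <= r2 A.

Definition approves (A : dinterval) (p : R) : Prop :=
  (l1 A <= p <= r1 A) \/ (l2 A <= p <= r2 A).

Definition Rleb (x y : R) : bool := if Rle_dec x y then true else false.

Definition approvesb (A : dinterval) (p : R) : bool :=
  (Rleb (l1 A) p && Rleb p (r1 A)) || (Rleb (l2 A) p && Rleb p (r2 A)).

(* A society is the list of the approval sets of its voters (n = length). *)
Definition society := list dinterval.

Definition double_interval_society (S : society) : Prop :=
  Forall valid_dinterval S.

Definition pairwise_intersecting (S : society) : Prop :=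
  forall u v, In u S -> In v S -> exists p, approves u p /\ approves v p.

Definition approval (S : society) (p : R) : nat :=
  length (filter (fun A => approvesb A p) S).

Definition is_approval_number (S : society) (k : nat) : Prop :=
  (exists p, approval S p = k) /\ (forall p, (approval S p <= k)%nat).

Definition Rfloor (x : R) : Z := (up x - 1)%Z.
Definition Rceil (x : R) : Z := (- Rfloor (- x))%Z.

(* Main.v *)
Require Import Defs.
From Stdlib Require Import Reals ZArith List Lra Lia Psatz.
Module Aux.
From mathcomp Require Import all_boot zify.
Open Scope nat_scope.

Lemma RlebP (x y : R) : reflect (Rle x y) (Rleb x y).
Proof. rewrite /Rleb; case: Rle_dec => h; constructor => //. Qed.

Definition ival (A : dinterval) (b : bool) : R * R :=
  if b then (l2 A, r2 A) else (l1 A, r1 A).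
Definition containsb (iv : R * R) (p : R) := Rleb iv.1 p && Rleb p iv.2.

Lemma approvesbE A p : approvesb A p = containsb (ival A false) p || containsb (ival A true) p.
Proof. by []. Qed.

Lemma length_filter {T} (f : T -> bool) s : length (List.filter f s) = count f s.
Proof. elim: s => //= x s IH; case: (f x) => /=; rewrite IH //. Qed.

Lemma length_size {T} (s : list T) : length s = size s.
Proof. by elim: s => //= x s ->. Qed.

Lemma card_nth {T} (d : T) (s : seq T) (f : T -> bool) :
  #|[set i : 'I_(size s) | f (nth d s i)]| = count f s.
Proof.
transitivity (count f (mkseq (nth d s) (size s))); last by rewrite mkseq_nth.
rewrite /mkseq count_map -val_enum_ord count_map cardsE cardE.
rewrite /enum_mem size_filter -enumT (@eq_filter _ _ predT) // filter_predT. by apply: eq_count.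
Qed.

Lemma nth_In' {T} (d : T) s i : i < size s -> In (nth d s i) s.
Proof. elim: s i => //= x s IH [|i] /= h; [left | right; apply: IH] => //. Qed.

Lemma card_dep (T1 T2 : finType) (F : T1 -> {set T2}) :
  #|[set x : T1 * T2 | x.2 \in F x.1]| = \sum_i #|F i|.
Proof.
rewrite -sum1dep_card.
under [RHS]eq_bigr => i _ do rewrite -sum1_card.
rewrite pair_big_dep /=. by apply: eq_bigl => -[x y].
Qed.

Section Sums.
Variable k : nat.
Let s N := \sum_(j < N) minn k.-1 j.
Lemma sA N : N <= k -> 2 * s N = N * N.-1.
Proof.
elim: N => [|N IH] h; first by rewrite /s big_ord0.
rewrite /s big_ord_recr /= -/(s N) mulnDr IH; last by lia.
have -> : minn k.-1 N = N by lia.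
case: N {IH h} => // N /=; nia.
Qed.
Lemma sB m : 1 <= k -> 2 * s (k + m) = k * k.-1 + 2 * m * k.-1.
Proof.
move=> k1; elim: m => [|m IH]; first by rewrite addn0 sA // muln0 addn0.
rewrite addnS /s big_ord_recr /= -/(s (k+m)) mulnDr IH.
have -> : minn k.-1 (k + m) = k.-1 by lia.
nia.
Qed.
End Sums.

Lemma final_nat n k : 1 <= k -> k <= n ->
  n * n.-1 <= 2 * \sum_(j < n * 2) minn k.-1 j -> n * n + k * k + 3 * n <= 4 * n * k + k.
Proof.
move=> k1 kn.
have -> : n * 2 = k + (n * 2 - k) by lia.
rewrite sB //.
case: k k1 kn => // k _ kn /=.
case: n kn => // n kn /=. nia.
Qed.

Definition d0 := DI R0 R0 R0 R0.

Section Comb.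
Variable S : society.
Variable k : nat.
Hypothesis Sval : double_interval_society S.
Hypothesis Spi : pairwise_intersecting S.
Hypothesis Sk : is_approval_number S k.

Let n := size S.
Let V (u : nat) := nth d0 S u.
Let lft (x : nat * bool) := (ival (V x.1) x.2).1.
Let le := fun x y : nat * bool => Rleb (lft x) (lft y).
Let allI := [seq (u, b) | u <- iota 0 n, b <- [:: false; true]].
Let L := sort le allI.
Let N := size L.
Let x0 := (0, false).

Lemma size_L : N = n * 2.
Proof. by rewrite /N /L size_sort /allI size_allpairs size_iota. Qed.

Lemma memL x : (x \in L) = (x.1 < n).
Proof.
rewrite /L mem_sort; apply/allpairsP/idP => [[[u b] [/= h1 h2 ->]]|h].
  by move: h1; rewrite mem_iota.
exists x; split => //; first by rewrite mem_iota.
  by case: x.2.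
by case: x h.
Qed.

Lemma le_total : total le.
Proof. move=> x y; rewrite /le; case: (RlebP (lft x) (lft y)) => //= h; apply/RlebP; lra. Qed.
Lemma le_trans : transitive le.
Proof. move=> y x z /RlebP h1 /RlebP h2; apply/RlebP; lra. Qed.
Lemma le_refl : reflexive le.
Proof. move=> x; apply/RlebP; lra. Qed.

Lemma sortedL i j : i <= j -> j < N -> Rle (lft (nth x0 L i)) (lft (nth x0 L j)).
Proof.
move=> hij hj; apply/RlebP.
apply: (sorted_leq_nth le_trans le_refl x0 (sort_sorted le_total allI)) => //.
rewrite inE; exact: (leq_ltn_trans hij).
Qed.

Lemma validV u : u < n -> valid_dinterval (V u).
Proof.
move=> h; move: Sval; rewrite /double_interval_society Forall_forall; apply.
exact: nth_In'.
Qed.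

Lemma idx_lt (u : 'I_n) b : index (val u, b) L < N.
Proof. by rewrite index_mem memL /=. Qed.

Definition idx (u : 'I_n) b : 'I_N := Ordinal (idx_lt u b).

Lemma nth_idx u b : nth x0 L (idx u b) = (val u, b).
Proof. by rewrite /= nth_index // memL /=. Qed.

Let own (j : nat) := (nth x0 L j).1.

Lemma own_lt (j : 'I_N) : own j < n.
Proof. by rewrite /own -memL mem_nth. Qed.

Definition meets (u v : nat) (bb : bool * bool) :=
  Rleb (ival (V u) bb.1).1 (ival (V v) bb.2).2 && Rleb (ival (V v) bb.2).1 (ival (V u) bb.1).2.

Definition pk u v := odflt (false, false) [pick bb | meets u v bb].

Lemma pk_meets (u v : 'I_n) : meets u v (pk u v).
Proof.
rewrite /pk; case: pickP => [bb //|H].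
have [p [hu hv]] := Spi (V u) (V v) (nth_In' d0 S u (ltn_ord u)) (nth_In' d0 S v (ltn_ord v)).
have getb : forall A, approves A p -> exists b, Rle (ival A b).1 p /\ Rle p (ival A b).2.
  by move=> A [h|h]; [exists false | exists true].
have [b1 [h1 h1']] := getb _ hu; have [b2 [h2 h2']] := getb _ hv.
move: (H (b1, b2)); rewrite /meets /=.
by case: RlebP => [_|]; [case: RlebP => //|]; lra.
Qed.

Definition f (uv : 'I_n * 'I_n) : ('I_N * 'I_n) * bool :=
  let bb := pk uv.1 uv.2 in
  let i := idx uv.1 bb.1 in let j := idx uv.2 bb.2 in
  if i < j then ((j, uv.1), uv.1 < uv.2) else ((i, uv.2), uv.1 < uv.2).

Definition Q (j : 'I_N) : {set 'I_n} :=
  [set w : 'I_n | (val w != own j) && [exists i : 'I_N, (i < j) && (own i == val w) &&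
     containsb (ival (V w) (nth x0 L i).2) (lft (nth x0 L j))]].

Definition Pairs := [set uv : 'I_n * 'I_n | uv.2 \in [set~ uv.1]].

Lemma own_idx u b : own (idx u b) = val u.
Proof. by rewrite /own nth_idx. Qed.

Lemma own_index (u : 'I_n) b : own (index (val u, b) L) = val u.
Proof. exact: (own_idx u b). Qed.

Lemma f_inj : {in Pairs &, injective f}.
Proof.
move=> [u v] [u' v']; rewrite !inE /= => huv hu'v'.
rewrite /f /=.
case: ifP => _; case: ifP => _ [] e1 e2 e3; move: e1 e2 e3.
all: move=> e1 e2 e3.
- by rewrite e2; congr pair; apply: val_inj; rewrite -(own_index v (pk u v).2) e1 own_index.
- have ev : v = u' by apply: val_inj; rewrite -(own_index v (pk u v).2) e1 own_index.
  subst u' v'; exfalso; move: e3 huv; case: ltngtP => // h _.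
  by rewrite (val_inj h) eqxx.
- have ev : u = v' by apply: val_inj; rewrite -(own_index u (pk u v).1) e1 own_index.
  subst u' v'; exfalso; move: e3 huv; case: ltngtP => // h _.
  by rewrite (val_inj h) eqxx.
- by rewrite e2; congr pair; apply: val_inj; rewrite -(own_index u (pk u v).1) e1 own_index.
Qed.

Lemma nth_index' (u : 'I_n) b : nth x0 L (index (val u, b) L) = (val u, b).
Proof. exact: (nth_idx u b). Qed.

Lemma f_img uv : uv \in Pairs -> (f uv).1.2 \in Q (f uv).1.1.
Proof.
case: uv => u v; rewrite !inE /= => huv.
have := pk_meets u v; rewrite /meets /f /=.
case: (pk u v) => b1 b2 /= /andP [/RlebP m1 /RlebP m2].
have hne : val u != val v by apply: contra huv => /eqP /val_inj ->.
case: ltnP => hij /=.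
- rewrite own_index hne /=; apply/existsP; exists (idx u b1) => /=.
  rewrite hij own_index eqxx /= !nth_index' /=.
  apply/andP; split; apply/RlebP => //.
  have := sortedL _ _ (ltnW hij) (idx_lt v b2); rewrite /lft !nth_index' //.
- rewrite own_index eq_sym hne /=; apply/existsP; exists (idx v b2) => /=.
  have hlt : index (val v, b2) L < index (val u, b1) L.
    rewrite ltn_neqAle hij andbT; apply/negP => /eqP e.
    have := nth_index' v b2; rewrite e nth_index' => -[] e'.
    by move=> _; move: hne; rewrite /= e' eqxx.
  rewrite hlt own_index eqxx /= !nth_index' /=.
  apply/andP; split; apply/RlebP => //.
  have := sortedL _ _ (ltnW hlt) (idx_lt u b1); rewrite /lft !nth_index' //.
Qed.

Lemma Q_le_j (j : 'I_N) : #|Q j| <= j.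
Proof.
have := @uniq_leq_size _ (map val (enum (Q j))) (map own (iota 0 j)).
rewrite !size_map size_iota -cardE; apply; first by rewrite (map_inj_uniq val_inj) enum_uniq.
move=> x /mapP [w]; rewrite mem_enum inE => /andP [_ /existsP [i /andP [/andP [hi /eqP hw] _]]] ->.
by apply/mapP; exists (val i); [rewrite mem_iota | rewrite hw].
Qed.

Lemma Q_lt_k (j : 'I_N) : #|Q j| < k.
Proof.
pose p := lft (nth x0 L j).
pose A := [set w : 'I_(size S) | approvesb (nth d0 S w) p].
have hA : #|A| <= k.
  rewrite /A (card_nth d0 S (fun B => approvesb B p)) -length_filter.
  apply/leP; exact: (proj2 Sk p).
apply: leq_trans hA; apply: proper_card; apply/properP; split.
- apply/subsetP => w; rewrite inE => /andP [_ /existsP [i /andP [/andP [_ /eqP hw] hc]]].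
  rewrite inE approvesbE; move: hc; case: (nth x0 L i).2 => -> //; by rewrite orbT.
- exists (Ordinal (own_lt j)); last by rewrite inE /= eqxx.
  rewrite inE /= approvesbE /p /lft.
  have := own_lt j; rewrite /own; case: (nth x0 L j) => a b /= ha.
  have [h1 [h2 h3]] := validV _ ha.
  change (V a) with (nth d0 S a) in *.
  case: b; apply/orP; [right|left]; apply/andP; split; apply/RlebP; rewrite /ival /=; lra.
Qed.

Lemma card_Pairs : #|Pairs| = n * n.-1.
Proof.
rewrite /Pairs (@card_dep _ _ (fun u : 'I_n => [set~ u])).
under eq_bigr => i _ do rewrite cardsC1 card_ord.
by rewrite sum_nat_const card_ord.
Qed.

Lemma comb_sum : n * n.-1 <= 2 * \sum_(j < N) minn k.-1 j.
Proof.
rewrite -card_Pairs -(card_in_imset f_inj).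
apply: (@leq_trans #|setX [set jw : 'I_N * 'I_n | jw.2 \in Q jw.1] [set: bool]|).
  apply: subset_leq_card; apply/subsetP => x /imsetP [uv huv ->].
  case: (f uv) (f_img uv huv) => [[j w] b] /= h; by rewrite in_setX inE in_setT andbT.
rewrite cardsX card_dep cardsT card_bool mulnC leq_mul2l /=.
apply: leq_sum => j _.
have h1 := Q_le_j j; have h2 := Q_lt_k j.
rewrite leq_min h1 andbT; move: h2; by case: (k).
Qed.

End Comb.

Lemma comb_main (S : society) (k : nat) :
  (1 <= length S)%coq_nat -> double_interval_society S -> pairwise_intersecting S ->
  is_approval_number S k ->
  [&& 1 <= k, k <= length S & length S * length S + k * k + 3 * length S <= 4 * length S * k + k].
Proof.
move=> hn Sv Spi Sk.
rewrite length_size.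
have hk1 : 1 <= k.
  clear Spi; case: S hn Sv Sk => [|A S'] /= hn Sv [_ Sk2]; first by inversion hn.
  have := Sk2 (l1 A); rewrite /approval length_filter /= => /leP.
  inversion Sv as [|? ? [h1 _]]; subst.
  have -> : approvesb A (l1 A) by rewrite approvesbE /containsb /=; apply/orP; left; apply/andP; split; apply/RlebP; lra.
  by move=> h; apply: leq_trans h.
have hkn : k <= size S.
  case: Sk => [[p <-] _]; rewrite /approval length_filter; exact: count_size.
rewrite hk1 hkn /=.
apply: final_nat => //.
have := @comb_sum S k Sv Spi Sk.
rewrite -!(big_mkord xpredT (fun j => minn k.-1 j)) size_L //.
Qed.

Lemma comb_peano (S : society) (k : nat) :
  (1 <= length S)%coq_nat -> double_interval_society S -> pairwise_intersecting S ->
  is_approval_number S k ->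
  (1 <= k)%coq_nat /\ (k <= length S)%coq_nat /\
  (Nat.add (Nat.add (Nat.mul (length S) (length S)) (Nat.mul k k)) (Nat.mul 3 (length S))
    <= Nat.add (Nat.mul (Nat.mul 4 (length S)) k) k)%coq_nat.
Proof.
move=> hn Sv Spi Sk.
have /and3P [k1 kn hc] := comb_main S k hn Sv Spi Sk.
split; [exact/leP|split; [exact/leP|]].
apply/leP; rewrite !multE !plusE; exact: hc.
Qed.
End Aux.
Open Scope R_scope.

Lemma real_part (nr ar : R) :
  1 <= nr -> 1 <= ar -> ar <= nr ->
  nr * nr + ar * ar + 3 * nr <= 4 * nr * ar + ar ->
  2 * nr + 1 / 2 - sqrt (3 * nr ^ 2 - nr + 1 / 4) <= ar /\
  ar / nr >= 2 - sqrt 3 + (3 + sqrt 3) / (6 * nr) - sqrt 3 / (24 * nr ^ 2) /\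
  nr <= 2 * ar - 3 / 2 + sqrt (3 * ar ^ 2 - 5 * ar + 9 / 4).
Proof.
intros hn ha han h.
assert (hD : 0 <= 3 * nr ^ 2 - nr + 1 / 4) by nra.
assert (hE : 0 <= 3 * ar ^ 2 - 5 * ar + 9 / 4) by nra.
set (D := 3 * nr ^ 2 - nr + 1 / 4) in *.
set (E := 3 * ar ^ 2 - 5 * ar + 9 / 4) in *.
pose proof (sqrt_sqrt D hD) as sD. pose proof (sqrt_pos D) as pD.
pose proof (sqrt_sqrt E hE) as sE. pose proof (sqrt_pos E) as pE.
pose proof (sqrt_sqrt 3 ltac:(lra)) as s3. pose proof (sqrt_pos 3) as p3.
set (d := sqrt D) in *. set (e := sqrt E) in *. set (t := sqrt 3) in *.
assert (h1 : 2 * nr + 1 / 2 - d <= ar).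
{ destruct (Rle_dec (2 * nr + 1/2 - ar) 0) as [H|H]; [nra|].
  unfold D in sD. nra. }
split; [exact h1|split].
- set (w := / nr).
  assert (hw : nr * w = 1) by (unfold w; field; lra).
  assert (w0 : 0 < w) by (unfold w; apply Rinv_0_lt_compat; lra).
  assert (w1 : w <= 1) by nra.
  assert (hd : d <= t * (nr - 1/6 + w / 24)).
  { assert (ht : 0 <= nr - 1/6 + w/24) by lra.
    assert (hsq : D <= 3 * (nr - 1/6 + w/24) ^ 2).
    { unfold D. assert (3 * (nr - 1/6 + w/24) ^ 2 - (3 * nr ^ 2 - nr + 1 / 4)
        = 1/12 - w/24 + w*w/192) by (ring_simplify; rewrite ?hw; nra). nra. }
    destruct (Rle_dec d (t * (nr - 1/6 + w / 24))) as [H|H]; [exact H|].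
    exfalso. assert (0 <= t * (nr - 1/6 + w/24)) by nra. nra. }
  assert (hx : ar >= 2 * nr - t * nr + (3 + t) / 6 - t * w / 24) by nra.
  replace (ar / nr) with (ar * w) by (unfold w; field; lra).
  replace ((3 + t) / (6 * nr)) with ((3 + t) * w / 6) by (unfold w; field; lra).
  replace (t / (24 * nr ^ 2)) with (t * w * w / 24) by (unfold w; field; lra).
  assert (ar * w >= (2 * nr - t * nr + (3 + t) / 6 - t * w / 24) * w) by nra.
  nra.
- destruct (Rle_dec (nr - (2 * ar - 3/2)) 0) as [H|H]; [nra|].
  unfold E in sE. nra.
Qed.

Theorem theorem4p1 (S : society) (k : nat) :
  (1 <= length S)%nat ->
  double_interval_society S ->
  pairwise_intersecting S ->
  is_approval_number S k ->
  let n := INR (length S) in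
  let a := INR k in
  (Z.of_nat k >= Rceil (2 * n + 1 / 2 - sqrt (3 * n ^ 2 - n + 1 / 4)))%Z /\
  a / n >= 2 - sqrt 3 + (3 + sqrt 3) / (6 * n) - sqrt 3 / (24 * n ^ 2) /\
  (Z.of_nat (length S) <= Rfloor (2 * a - 3 / 2 + sqrt (3 * a ^ 2 - 5 * a + 9 / 4)))%Z.

Proof.
intros hn Sv Spi Sk n a.
destruct (Aux.comb_peano S k hn Sv Spi Sk) as [k1 [kn hc]].
apply le_INR in hc; apply le_INR in k1; apply le_INR in kn; apply le_INR in hn.
rewrite !plus_INR, !mult_INR in hc.
assert (I3 : INR 3 = 3) by (simpl; lra).
assert (I4 : INR 4 = 4) by (simpl; lra).
rewrite I3, I4 in hc. simpl in k1, hn.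
destruct (real_part (INR (length S)) (INR k) hn k1 kn hc) as [R1 [R2 R3]].
fold n a in R1, R2, R3.
split; [|split; [exact R2|]].
- unfold Rceil, Rfloor.
  set (x := 2 * n + 1 / 2 - sqrt (3 * n ^ 2 - n + 1 / 4)) in *.
  destruct (archimed (- x)) as [H1 H2].
  assert (IZR (up (- x)) > IZR (- Z.of_nat k)).
  { rewrite opp_IZR, <- INR_IZR_INZ. fold a. lra. }
  apply lt_IZR in H. lia.
- unfold Rfloor.
  set (y := 2 * a - 3 / 2 + sqrt (3 * a ^ 2 - 5 * a + 9 / 4)) in *.
  destruct (archimed y) as [H1 H2].
  assert (IZR (up y) > IZR (Z.of_nat (length S))).
  { rewrite <- INR_IZR_INZ. fold n. lra. }
  apply lt_IZR in H. lia.
Qed.
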